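(* Let $A$ be a finite non-empty alphabet. For all non-empty words $\mathbf a,\mathbf b\in A^+$ of equal length, $\mathbf a:\mathbf a^r::\mathbf b:\mathbf b^r$ holds in $(A^+,\cdot,A^+)$. Consequently $\mathbf a:\mathbf a^r::\mathbf a^r:\mathbf a$ for every $\mathbf a\in A^+$.
   Context: $A^+$ is the set of non-empty finite words over $A$; $\mathbf a^r:=a_n\ldots a_1$ is the reverse of $\mathbf a=a_1\ldots a_n$. $(A^+,\cdot,A^+)$ is the algebra with universe $A^+$, concatenation, and every non-empty word as a constant. Terms are built from a denumerable variable set, concatenation and these constants; $X(s)$ is the set of variables of $s$. A justification is a pair $s\to t$ with $X(t)\subseteq X(s)$. $\uparrow(\mathbf a\to\mathbf b)$ is the set of justifications $s\to t$ with $\mathbf a=s(\mathbf o)$, $\mathbf b=t(\mathbf o)$ for some tuple $\mathbf o$ of elements of $A^+$; $\uparrow(\mathbf a\to\mathbf b:\!\cdot\,\mathbf c\to\mathbf d):=\uparrow(\mathbf a\to\mathbf b)\cap\uparrow(\mathbf c\to\mathbf d)$. A justification is trivial if it lies in all sets $\uparrow(\mathbf a'\to\mathbf b':\!\cdot\,\mathbf c'\to\mathbf d')$. $\mathbf a\to\mathbf b:\!\cdot\,\mathbf c\to\mathbf d$ holds iff either (i) all justifications in $\uparrow(\mathbf a\to\mathbf b)\cup\uparrow(\mathbf c\to\mathbf d)$ are trivial, or (ii) $J_{\mathbf d}:=\uparrow(\mathbf a\to\mathbf b:\!\cdot\,\mathbf c\to\mathbf d)$ contains a non-trivial justification and for every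 $\mathbf d'$, $J_{\mathbf d}\subseteq J_{\mathbf d'}$ implies $J_{\mathbf d'}$ contains a non-trivial justification and $J_{\mathbf d'}\subseteq J_{\mathbf d}$ (ignoring trivial justifications). $\mathbf a:\mathbf b::\mathbf c:\mathbf d$ iff $\mathbf a\to\mathbf b:\!\cdot\,\mathbf c\to\mathbf d$, $\mathbf b\to\mathbf a:\!\cdot\,\mathbf d\to\mathbf c$, $\mathbf c\to\mathbf d:\!\cdot\,\mathbf a\to\mathbf b$, $\mathbf d\to\mathbf c:\!\cdot\,\mathbf b\to\mathbf a$ all hold. *)

(* Defs.v *)
From mathcomp Require Import all_boot.
Set Implicit Arguments.
Unset Strict Implicit.
Unset Printing Implicit Defensive.

Section Analogy.
Variable A : finType.

(* Elements of A^+ are represented as words w : seq A with w != [::]. *)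
Definition neword := {w : seq A | w != [::]}.

Inductive term : Type :=
| TVar of nat
| TCst of neword
| TCat of term & term.

Fixpoint vars (s : term) : seq nat :=
  match s with
  | TVar n => [:: n]
  | TCst _ => [::]
  | TCat s1 s2 => vars s1 ++ vars s2
  end.

Fixpoint eval (o : nat -> seq A) (s : term) : seq A :=
  match s with
  | TVar n => o n
  | TCst w => sval w
  | TCat s1 s2 => eval o s1 ++ eval o s2
  end.

Definition justification (j : term * term) : Prop :=
  {subset vars j.2 <= vars j.1}.

Definition up (a b : seq A) (j : term * term) : Prop :=
  justification j /\
  exists o : nat -> seq A, (forall n, o n != [::]) /\
    eval o j.1 = a /\ eval o j.2 = b.

Definition up2 (a b c d : seq A) (j : term * term) : Prop :=
  up a b j /\ up c d j.

Definition trivial_just (j : term * term) : Prop :=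
  forall a' b' c' d' : seq A, a' != [::] -> b' != [::] -> c' != [::] ->
    d' != [::] -> up2 a' b' c' d' j.

Definition nt_subset (J J' : term * term -> Prop) : Prop :=
  forall j, J j -> ~ trivial_just j -> J' j.

Definition has_nontrivial (J : term * term -> Prop) : Prop :=
  exists j, J j /\ ~ trivial_just j.

Definition arrow_prop (a b c d : seq A) : Prop :=
  (forall j, up a b j \/ up c d j -> trivial_just j)
  \/
  (has_nontrivial (up2 a b c d) /\
   forall d' : seq A, d' != [::] ->
     nt_subset (up2 a b c d) (up2 a b c d') ->
     has_nontrivial (up2 a b c d') /\ nt_subset (up2 a b c d') (up2 a b c d)).

Definition analogy (a b c d : seq A) : Prop :=
  arrow_prop a b c d /\ arrow_prop b a d c /\
  arrow_prop c d a b /\ arrow_prop d c b a.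

End Analogy.

(* Main.v *)
Require Import Defs.
From mathcomp Require Import all_boot.
From mathcomp Require Import zify.

Section Aux.
Variable A : finType.

Fixpoint mk (x : nat) (l : seq nat) : term A :=
  match l with [::] => TVar A x | y :: l' => TCat (TVar A x) (mk y l') end.

Lemma vars_mk x l : vars (mk x l) = x :: l.
Proof. by elim: l x => [|y l IH] x //=; rewrite IH. Qed.

Lemma eval_mk (o : nat -> seq A) x l : eval o (mk x l) = flatten (map o (x :: l)).
Proof. by elim: l x => [|y l IH] x /=; [rewrite cats0 | rewrite IH]. Qed.

Lemma eval_ne (o : nat -> seq A) (s : term A) : (forall n, o n != [::]) -> eval o s != [::].
Proof.
move=> ho; elim: s => [n|w|s1 IH1 s2 IH2] //=; first exact: valP w.
by move: IH1; case: (eval o s1).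
Qed.

Lemma eval1 {o : nat -> seq A} {s : term A} : (forall n, o n != [::]) -> size (eval o s) = 1 ->
  forall n, n \in vars s -> o n = eval o s.
Proof.
move=> ho; case: s => [m|w|s1 s2] //= H n.
- by rewrite inE => /eqP ->.
- have h1 := eval_ne o s1 ho; have h2 := eval_ne o s2 ho.
  move: H; rewrite size_cat.
  case: (eval o s1) h1 => [|? ?] //; case: (eval o s2) h2 => [|? ?] //=.
  move=> _ _ H; exfalso; lia.
Qed.

Lemma eval_ext (o o' : nat -> seq A) (t : term A) : (forall n, n \in vars t -> o n = o' n) ->
  eval o t = eval o' t.
Proof.
elim: t => [n|w|s1 IH1 s2 IH2] //= H.
- by apply: H; rewrite inE.
- rewrite IH1 ?IH2 // => n hn; apply: H; rewrite mem_cat hn ?orbT //.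
Qed.

Lemma no_trivial (c : A) (j : term A * term A) : ~ trivial_just j.
Proof.
move=> T.
have [[hj [o [ho [e1 e2]]]] [_ [o' [ho' [e1' e2']]]]] :=
  T [:: c] [:: c] [:: c] [:: c; c] isT isT isT isT.
have E : eval o j.2 = eval o' j.2.
  apply: eval_ext => n /hj hn.
  by rewrite (eval1 ho _ _ hn) ?(eval1 ho' _ _ hn) ?e1 ?e1'.
by move: E; rewrite e2 e2'.
Qed.

Lemma size_flat (o : nat -> seq A) l : (forall n, o n != [::]) ->
  size l <= size (flatten (map o l)).
Proof.
move=> ho; elim: l => [|x l IH] //=; rewrite size_cat.
have := ho x; case: (o x) => [|? ?] //= _; lia.
Qed.

Lemma flat_rev (o : nat -> seq A) l : (forall n, o n != [::]) ->
  size (flatten (map o l)) = size l ->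
  flatten (map o (rev l)) = rev (flatten (map o l)).
Proof.
move=> ho; elim: l => [|x l IH] //= H.
have := size_flat o l ho; have := ho x.
move: H; rewrite size_cat rev_cons map_rcons flatten_rcons rev_cat.
case: (o x) => [|y [|z s]] //= H _ H2; last by exfalso; lia.
by rewrite IH //; lia.
Qed.

Definition js (n : nat) : term A * term A :=
  let l := iota 0 n in
  (mk (head 0 l) (behead l), mk (head 0 (rev l)) (behead (rev l))).

Lemma hb (l : seq nat) : l != [::] -> head 0 l :: behead l = l.
Proof. by case: l. Qed.

Lemma js_just n : 0 < n -> justification (js n).
Proof.
move=> hn; rewrite /justification /js /= !vars_mk !hb //.
- by move=> x; rewrite mem_rev.
- by rewrite -size_eq0 size_iota; lia.
- by rewrite -size_eq0 size_rev size_iota; lia.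
Qed.

Lemma js_eval (o : nat -> seq A) n : 0 < n -> (forall k, o k != [::]) ->
  size (eval o (js n).1) = n -> eval o (js n).2 = rev (eval o (js n).1).
Proof.
move=> hn ho.
have n1 : iota 0 n != [::] by rewrite -size_eq0 size_iota; lia.
have n2 : rev (iota 0 n) != [::] by rewrite -size_eq0 size_rev size_iota; lia.
rewrite /js /= !eval_mk !hb //.
by move=> H; apply: flat_rev => //; rewrite H size_iota.
Qed.

Lemma js_up (c : A) w : w != [::] -> up w (rev w) (js (size w)).
Proof.
move=> hw; have hn : 0 < size w by rewrite lt0n size_eq0.
split; first exact: js_just.
exists (fun i => [:: nth c w i]); split => //.
have E : eval (fun i => [:: nth c w i]) (js (size w)).1 = w.
  have n1 : iota 0 (size w) != [::] by rewrite -size_eq0 size_iota; lia.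
  rewrite /js /= eval_mk hb //.
  have -> : forall l, flatten (map (fun i => [:: nth c w i]) l) = map (nth c w) l.
    by elim=> [|x l IH] //=; rewrite IH.
  by rewrite -/(mkseq _ _) mkseq_nth.
split => //; rewrite js_eval ?E //.
Qed.

Lemma arrow_main (c : A) (a b : seq A) : a != [::] -> b != [::] -> size a = size b ->
  arrow_prop a (rev a) b (rev b).
Proof.
move=> ha hb' hs; right.
have J : up2 a (rev a) b (rev b) (js (size a)).
  by split; [exact: js_up | rewrite hs; exact: js_up].
split; first by exists (js (size a)); split => //; exact: no_trivial.
move=> d' _ H.
have [_ [_ [o [ho [e1 e2]]]]] := H _ J (no_trivial c _).
have -> : d' = rev b.
  rewrite -e2 js_eval // -?e1 // ?e1 ?hs // lt0n size_eq0 //.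
split; last by [].
by exists (js (size a)); split => //; exact: no_trivial.
Qed.

End Aux.

Theorem mainTheorem15 (A : finType) (hA : 0 < #|A|) :
  (forall a b : seq A, a != [::] -> b != [::] -> size a = size b ->
     analogy a (rev a) b (rev b)) /\
  (forall a : seq A, a != [::] -> analogy a (rev a) (rev a) a).
Proof.
have [c _] : exists c : A, true.
  case: (pickP (@predT A)) => [c _|H]; first by exists c.
  by move: hA; rewrite eq_card0.
have M : forall a b : seq A, a != [::] -> b != [::] -> size a = size b ->
     analogy a (rev a) b (rev b).
  move=> a b ha hb hs.
  have ra : rev a != [::] by rewrite -size_eq0 size_rev size_eq0.
  have rb : rev b != [::] by rewrite -size_eq0 size_rev size_eq0.
  split; first exact: arrow_main.
  split; first by rewrite -{2}(revK a) -{2}(revK b); apply: arrow_main => //; rewrite !size_rev.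
  split; first exact: arrow_main.
  by rewrite -{2}(revK a) -{2}(revK b); apply: arrow_main => //; rewrite !size_rev.
split => // a ha.
have ra : rev a != [::] by rewrite -size_eq0 size_rev size_eq0.
by rewrite -{4}(revK a); apply: M => //; rewrite size_rev.
Qed.
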